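(* Let $\mathcal{NCP}$ be the noncrossing gap-insertion operad (defined in the context). For $n\geq 2$ let $p_n=\{[n-1]\}\in\mathcal{NCP}(n)$ be the one-block partition of $[n-1]$. Then the operad $\mathcal{NCP}$ is generated by the elements $p_n$, $n\geq 2$, subject to the relations $$p_m\diamond_m p_n=p_n\diamond_1 p_m\qquad\text{for all } m,n\geq 2.$$ That is, if $\mathcal{Q}$ denotes the quotient of the free non-symmetric set operad on generators $q_n$ of arity $n$ ($n\geq 2$) by the relations $q_m\circ_m q_n=q_n\circ_1 q_m$ ($m,n\geq 2$), then the operad morphism $\mathcal{Q}\to\mathcal{NCP}$ sending $q_n\mapsto p_n$ exists and is an isomorphism.
   Context: A partition of degree $n$ is a set partition of $[n]=\{1,\dots,n\}$ into nonempty blocks (for $n=0$ there is only the empty partition $\emptyset$); partitions of other finite linearly ordered sets are identified with partitions of $[n]$ via the unique order-preserving bijection. A partition is noncrossing if there are no $a<c<b<d$ with $a,b$ in one block and $c,d$ in a different block. The noncrossing gap-insertion operad $\mathcal{NCP}$ is the non-symmetric set operad with $\mathcal{NCP}(0)=\emptyset$ and, for $n\geq 1$, $\mathcal{NCP}(n)$ the set of noncrossing partitions of $[n-1]$ (so a partition of degree $n-1$ has arity $n$, its inputs being the $n$ gaps before, between and after its elements; $\mathcal{NCP}(1)=\{\emptyset\}$ and $\emptyset$ is the unit). The partial composition, for $P=\{\pi_1,\dots,\pi_k\}\in\mathcal{NCP}(m)$, $Q=\{\rho_1,\dots,\rho_l\}\in\mathcal{NCP}(n)$ and $i\in[m]$,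 is $$P\diamond_i Q=\{\chi(\pi_1),\dots,\chi(\pi_k),\rho_1+i-1,\dots,\rho_l+i-1\},$$ where $\chi(p)=p$ if $p<i$ and $\chi(p)=p+n-1$ otherwise (applied elementwise), and $X+c$ denotes the shift of a set $X$ by $c$. (That is, $Q$ is inserted into the $i$-th gap of $P$.) *)

(* Defs.v *)
From HB Require Import structures.
From mathcomp Require Import all_boot.
From mathcomp Require Import finmap.

Set Implicit Arguments.
Unset Strict Implicit.
Unset Printing Implicit Defensive.

Local Open Scope fset_scope.

Definition partition_set := {fset {fset nat}}.

Definition is_partition (k : nat) (P : partition_set) : Prop :=
  [/\ (forall B, B \in P -> B != fset0),
      (forall B C, B \in P -> C \in P -> B != C -> B `&` C = fset0) &
      (forall x, (exists2 B, B \in P & x \in B) <-> (1 <= x <= k))].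

Definition noncrossing (P : partition_set) : Prop :=
  forall B C a b c d, B \in P -> C \in P -> B != C ->
    a \in B -> b \in B -> c \in C -> d \in C ->
    ~~ [&& a < c, c < b & b < d].

Definition NCP (n : nat) (P : partition_set) : Prop :=
  [/\ 1 <= n, is_partition n.-1 P & noncrossing P].

(* Partial composition P <>_i Q, for P in NCP(m), Q in NCP(n), i in [m]
   (the value does not depend on m). *)
Definition ncomp (i n : nat) (P Q : partition_set) : partition_set :=
  [fset [fset (if p < i then p else (p + n - 1)%N) | p : nat in B] | B : {fset nat} in P]
  `|` [fset [fset (r + i - 1)%N | r : nat in B] | B : {fset nat} in Q].

Definition pgen (n : nat) : partition_set := [fset [fset x | x : nat in iota 1 n.-1]].

(* The free non-symmetric set operad on generators q_n of arity n>=2:  *)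
(* planar rooted trees whose internal vertices have >= 2 children; a    *)
(* vertex with n children is labelled by the unique generator q_n.      *)
(* The leaf is the operad unit.                                         *)

Inductive tree : Type :=
| Leaf : tree
| Node : seq tree -> tree.

Fixpoint arity (t : tree) : nat :=
  match t with
  | Leaf => 1
  | Node ts => sumn (map arity ts)
  end.

Fixpoint wf (t : tree) : bool :=
  match t with
  | Leaf => true
  | Node ts => (2 <= size ts) && all wf ts
  end.

Definition corolla (n : nat) : tree := Node (nseq n Leaf).

(* partial composition t o_{j+1} s : graft s on the (0-based) j-th leaf of t *)
Fixpoint graft (t : tree) (j : nat) (s : tree) : tree :=
  match t with
  | Leaf => if j == 0 then s else Leaf
  | Node ts =>
      Node ((fix go (us : seq tree) (j : nat) : seq tree :=
               match us with
               | [::] => [::]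
               | u :: us' =>
                   if j < arity u then graft u j s :: us'
                   else u :: go us' (j - arity u)
               end) ts j)
  end.

Inductive treq : tree -> tree -> Prop :=
| treq_refl t : treq t t
| treq_sym t t' : treq t t' -> treq t' t
| treq_trans t u v : treq t u -> treq u v -> treq t v
| treq_rel m n : 2 <= m -> 2 <= n ->
    treq (graft (corolla m) m.-1 (corolla n)) (graft (corolla n) 0 (corolla m))
| treq_graft t t' s s' j : j < arity t -> treq t t' -> treq s s' ->
    treq (graft t j s) (graft t' j s').

(* The morphism from the free operad to NCP sending q_n to p_n:
   Node [t_1;...;t_k] |-> p_k o (eval t_1, ..., eval t_k), computed by
   successive partial compositions, left to right. *)
Fixpoint eval (t : tree) : partition_set :=
  match t with
  | Leaf => fset0
  | Node ts =>
      (fix go (us : seq tree) (pos : nat) (X : partition_set) : partition_set :=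
         match us with
         | [::] => X
         | u :: us' => go us' (pos + arity u)%N (ncomp pos (arity u) X (eval u))
         end) ts 1 (pgen (size ts))
  end.

(* Main.v *)
Require Import Defs.
From HB Require Import structures.
From mathcomp Require Import all_boot.
From mathcomp Require Import finmap.
From mathcomp Require Import zify.
Unset Printing Implicit Defensive.
Local Open Scope fset_scope.
Local Open Scope nat_scope.


Fixpoint allTr (P : tree -> Prop) (ts : seq tree) : Prop :=
  match ts with [::] => True | t :: ts => P t /\ allTr P ts end.



Definition tree_ind' (P : tree -> Prop) (HL : P Leaf)
  (HN : forall ts, allTr P ts -> P (Node ts)) : forall t, P t :=
  fix F t := match t with
  | Leaf => HL
  | Node ts => HN ts ((fix G ts : allTr P ts :=
        match ts with [::] => I | u :: us => conj (F u) (G us) end) ts)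
  end.

Section GG.
Variable s : tree.
Fixpoint ggo (us : seq tree) (j : nat) : seq tree :=
  match us with
  | [::] => [::]
  | u :: us' => if j < arity u then graft u j s :: us' else u :: ggo us' (j - arity u)
  end.
End GG.

Lemma graftN ts j s : graft (Node ts) j s = Node (ggo s ts j).
Proof. reflexivity. Qed.

Fixpoint evgo (us : seq tree) (pos : nat) (X : partition_set) : partition_set :=
  match us with
  | [::] => X
  | u :: us' => evgo us' (pos + arity u)%N (ncomp pos (arity u) X (eval u))
  end.
Lemma evalN ts : eval (Node ts) = evgo ts 1 (pgen (size ts)).
Proof. reflexivity. Qed.

Definition sar (ts : seq tree) := sumn (map arity ts).
Lemma arityN ts : arity (Node ts) = sar ts. Proof. by []. Qed.
Lemma sar_cons t ts : sar (t :: ts) = arity t + sar ts. Proof. by []. Qed.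
Lemma sar_cat a b : sar (a ++ b) = sar a + sar b.
Proof. by rewrite /sar map_cat sumn_cat. Qed.

Lemma size_ggo s ts j : size (ggo s ts j) = size ts.
Proof. elim: ts j => [|u us IH] j //=. case: ifP => _ //=. by rewrite IH. Qed.

Lemma arity_graft {t j} s : j < arity t -> arity (graft t j s) + 1 = arity t + arity s.
Proof.
elim/tree_ind': t j => [|ts IH] j.
  by case: j => // _; rewrite addnC.
rewrite graftN !arityN.
elim: ts j IH => [|u us IHl] j //= [Hu Hus] Hj.
rewrite /sar /=. case: ifP => Hju /=.
  have := Hu j Hju. lia.
have := IHl (j - arity u) Hus. rewrite /sar. move: Hj Hju; rewrite /sar /=. lia.
Qed.

Lemma wf_graft {t j} s : j < arity t -> wf (graft t j s) = wf t && wf s.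
Proof.
elim/tree_ind': t j => [|ts IH] j.
  by case: j.
rewrite graftN /= size_ggo => Hj.
case: (2 <= size ts) => //=.
elim: ts j IH Hj => [|u us IHl] j //= [Hu Hus] Hj.
case: ifP => Hju /=.
  rewrite Hu //. by case: (wf u); case: (wf s); case: (all wf us).
rewrite IHl //; last by move: Hj Hju; rewrite /sar /=; lia.
by case: (wf u); case: (wf s); case: (all wf us).
Qed.

Lemma graft_in pre u post j s : j < arity u ->
  graft (Node (pre ++ u :: post)) (sar pre + j) s = Node (pre ++ graft u j s :: post).
Proof.
move=> Hj. rewrite graftN. congr Node.
elim: pre => [|v pre IH] /=; first by rewrite add0n Hj.
rewrite sar_cons -addnA ltnNge leq_addr /=. by rewrite addKn IH.
Qed.

Lemma graft_mid pre post s :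
  graft (Node (pre ++ Leaf :: post)) (sar pre) s = Node (pre ++ s :: post).
Proof. by rewrite -[sar pre]addn0 graft_in. Qed.

Lemma graft_first u us j s : j < arity u -> graft (Node (u :: us)) j s = Node (graft u j s :: us).
Proof. move=> H. by rewrite -[j]add0n (graft_in [::]). Qed.

Lemma wf_arity {t} : wf t -> 0 < arity t.
Proof.
elim/tree_ind': t => [|ts IH] //= /andP [H2 Hall].
case: ts H2 Hall IH => [|u us] //= _ /andP [Hu _] [IHu _].
have := IHu Hu. lia.
Qed.

Lemma wf_arity2 {ts} : wf (Node ts) -> 1 < arity (Node ts).
Proof.
move=> /= /andP [H2 Hall].
case: ts H2 Hall => [|u [|v us]] //= _ /and3P [Hu Hv _].
have := wf_arity Hu. have := wf_arity Hv. lia.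
Qed.


Fixpoint rts (ts : seq tree) (o : nat) : seq nat :=
  match ts with
  | [::] => [::]
  | u :: us => match us with [::] => [::] | _ => (o + arity u) :: rts us (o + arity u) end
  end.

Lemma rts_cons2 u v w o : rts [:: u, v & w] o = (o + arity u) :: rts (v :: w) (o + arity u).
Proof. by []. Qed.
Lemma rts_one u o : rts [:: u] o = [::]. Proof. by []. Qed.

Definition blk (l : seq nat) : {fset nat} := [fset x | x : nat in l].

Fixpoint den (t : tree) (o : nat) : partition_set :=
  match t with
  | Leaf => fset0
  | Node ts => [fset blk (rts ts o)] `|`
      (fix chs us o := match us with [::] => fset0
                        | u :: us' => den u o `|` chs us' (o + arity u) end) ts o
  end.

Fixpoint chs (us : seq tree) (o : nat) : partition_set :=
  match us with [::] => fset0 | u :: us' => den u o `|` chs us' (o + arity u) end.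

Lemma denN ts o : den (Node ts) o = [fset blk (rts ts o)] `|` chs ts o.
Proof. reflexivity. Qed.

Lemma in_blk l x : (x \in blk l) = (x \in l).
Proof. by rewrite /blk inE. Qed.

Definition shb (c : nat) (B : {fset nat}) : {fset nat} := [fset x + c | x : nat in B].
Definition shP (c : nat) (P : partition_set) : partition_set :=
  [fset shb c B | B : {fset nat} in P].

Lemma shPU c P Q : shP c (P `|` Q) = shP c P `|` shP c Q.
Proof.
apply/fsetP => B; rewrite in_fsetU; apply/imfsetP/orP.
  by move=> [C]; rewrite in_fsetU => /orP [] HC ->; [left|right]; apply/imfsetP; exists C.
by move=> [] /imfsetP [C HC ->]; exists C => //; rewrite in_fsetU HC ?orbT.
Qed.

Lemma shP1 c B : shP c [fset B] = [fset shb c B].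
Proof.
apply/fsetP => C; rewrite in_fset1; apply/imfsetP/eqP.
  by move=> [D]; rewrite in_fset1 => /eqP -> ->.
by move=> ->; exists B => //; rewrite in_fset1.
Qed.

Lemma shP0 c : shP c fset0 = fset0.
Proof. apply/fsetP => C; rewrite in_fset0; apply/imfsetP => -[D]; by rewrite in_fset0. Qed.

Lemma shb_blk c l : shb c (blk l) = blk (map (addn^~ c) l).
Proof.
apply/fsetP => x; rewrite in_blk; apply/imfsetP/mapP.
  by move=> [y]; rewrite in_blk => Hy ->; exists y.
by move=> [y Hy ->]; exists y => //; rewrite in_blk.
Qed.

Lemma rts_shift ts o c : rts ts (o + c) = map (addn^~ c) (rts ts o).
Proof.
elim: ts o => [|u us IH] o //. case: us IH => [|v w] IH //.
rewrite !rts_cons2.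
have -> : o + c + arity u = (o + arity u) + c by lia.
by rewrite IH.
Qed.

Lemma chs_shift ts o c : allTr (fun t => forall o, den t (o + c) = shP c (den t o)) ts ->
  chs ts (o + c) = shP c (chs ts o).
Proof.
elim: ts o => [|u us IHl] o /=; first by rewrite shP0.
move=> [Hu Hus]. rewrite shPU Hu.
have -> : o + c + arity u = (o + arity u) + c by lia.
by rewrite IHl.
Qed.

Lemma den_shift t o c : den t (o + c) = shP c (den t o).
Proof.
elim/tree_ind': t o => [|ts IH] o; first by rewrite /= shP0.
rewrite !denN shPU shP1 shb_blk -rts_shift. congr (_ `|` _).
exact: chs_shift.
Qed.

Lemma chs_shift' ts o c : chs ts (o + c) = shP c (chs ts o).
Proof.
apply: chs_shift. elim: ts => //= u us IH; split => // o'; exact: den_shift.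
Qed.

Definition inr (lo hi : nat) (B : {fset nat}) := forall x, x \in B -> lo < x < hi.

Lemma rts_range {ts o x} : all wf ts -> x \in rts ts o -> o < x < o + sar ts.
Proof.
elim: ts o => [|u us IH] o //. case: us IH => [|v w] IH //.
rewrite rts_cons2 => /andP [Hu Hvw].
have Hau := wf_arity Hu.
rewrite inE => /orP [/eqP ->|Hx].
  move: Hvw => /= /andP [Hv _]. have := wf_arity Hv. rewrite !sar_cons. lia.
have := IH (o + arity u) Hvw Hx. rewrite !sar_cons. lia.
Qed.

Lemma chs_range_gen {ts o B} :
  allTr (fun t => forall o B, wf t -> B \in den t o -> B != fset0 /\ inr o (o + arity t) B) ts ->
  all wf ts -> B \in chs ts o -> B != fset0 /\ inr o (o + sar ts) B.
Proof.
elim: ts o => [|u us IHl] o; first by rewrite /= in_fset0.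
move=> [Hu Hus] /= /andP [wu wus]. rewrite in_fsetU => /orP [HB|HB].
  have [H1 H2] := Hu o B wu HB. split => // x Hx. have := H2 x Hx. rewrite sar_cons. lia.
have [H1 H2] := IHl (o + arity u) Hus wus HB. split => // x Hx. have := H2 x Hx.
have := wf_arity wu. rewrite sar_cons. lia.
Qed.

Lemma den_range {t o B} : wf t -> B \in den t o -> B != fset0 /\ inr o (o + arity t) B.
Proof.
elim/tree_ind': t o B => [|ts IH] o B; first by rewrite in_fset0.
move=> Hw. rewrite denN in_fsetU in_fset1 => /orP [/eqP ->|].
  move: Hw => /= /andP [H2 Hall]. split.
    case: ts H2 Hall {IH} => [|u [|v w]] //= _ _.
    apply/negP => /eqP /fsetP /(_ (o + arity u)). by rewrite in_blk in_fset0 inE eqxx.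
  move=> x; rewrite in_blk => Hx. exact: rts_range Hx.
move: Hw => /= /andP [_] Hall. exact: chs_range_gen.
Qed.

Lemma chs_range {ts o B} : all wf ts -> B \in chs ts o -> B != fset0 /\ inr o (o + sar ts) B.
Proof.
move=> Hall; apply: chs_range_gen => //.
elim: ts {Hall} => //= u us IH; split => // o' B'; exact: den_range.
Qed.


Definition mb (f : nat -> nat) (B : {fset nat}) : {fset nat} := [fset f x | x : nat in B].
Definition mP (f : nat -> nat) (P : partition_set) : partition_set :=
  [fset mb f B | B : {fset nat} in P].

Lemma mPU f P Q : mP f (P `|` Q) = mP f P `|` mP f Q.
Proof.
apply/fsetP => B; rewrite in_fsetU; apply/imfsetP/orP.
  by move=> [C]; rewrite in_fsetU => /orP [] HC ->; [left|right]; apply/imfsetP; exists C.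
by move=> [] /imfsetP [C HC ->]; exists C => //; rewrite in_fsetU HC ?orbT.
Qed.

Lemma mP1 f B : mP f [fset B] = [fset mb f B].
Proof.
apply/fsetP => C; rewrite in_fset1; apply/imfsetP/eqP.
  by move=> [D]; rewrite in_fset1 => /eqP -> ->.
by move=> ->; exists B => //; rewrite in_fset1.
Qed.

Lemma mP0 f : mP f fset0 = fset0.
Proof. apply/fsetP => C; rewrite in_fset0; apply/imfsetP => -[D]; by rewrite in_fset0. Qed.

Lemma mb_blk f l : mb f (blk l) = blk (map f l).
Proof.
apply/fsetP => x; rewrite in_blk; apply/imfsetP/mapP.
  by move=> [y]; rewrite in_blk => Hy ->; exists y.
by move=> [y Hy ->]; exists y => //; rewrite in_blk.
Qed.

Lemma eq_in_mb f g (B : {fset nat}) : (forall x, x \in B -> f x = g x) -> mb f B = mb g B.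
Proof.
move=> H; apply/fsetP => y; apply/imfsetP/imfsetP => -[x Hx ->]; exists x => //; by rewrite H.
Qed.

Lemma mb_id f (B : {fset nat}) : (forall x, x \in B -> f x = x) -> mb f B = B.
Proof.
move=> H; apply/fsetP => y; apply/imfsetP/idP => [[x Hx ->]|Hy]; first by rewrite H.
by exists y => //; rewrite H.
Qed.

Lemma eq_in_mP f g (P : partition_set) : (forall B x, B \in P -> x \in B -> f x = g x) -> mP f P = mP g P.
Proof.
move=> H; apply/fsetP => y; apply/imfsetP/imfsetP => -[B HB ->]; exists B => //;
apply: eq_in_mb => x Hx; [| symmetry]; exact: H HB Hx.
Qed.

Lemma mP_id f (P : partition_set) : (forall B x, B \in P -> x \in B -> f x = x) -> mP f P = P.
Proof.
move=> H; apply/fsetP => y; apply/imfsetP/idP => [[B HB ->]|Hy].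
  by rewrite mb_id // => x; apply: H.
exists y => //; rewrite mb_id // => x; apply: H Hy.
Qed.

Lemma shP_mP c P : shP c P = mP (addn^~ c) P.
Proof. by []. Qed.

Definition shf (th n p : nat) := if p < th then p else p + n - 1.

Lemma ncompE i n P Q : ncomp i n P Q = mP (shf i n) P `|` mP (fun r => r + i - 1) Q.
Proof. by []. Qed.

Lemma rts_cons u us o : us <> [::] -> rts (u :: us) o = (o + arity u) :: rts us (o + arity u).
Proof. by case: us. Qed.

Lemma ggo_nil s us j : us <> [::] -> ggo s us j <> [::].
Proof. by case: us => //= u us; case: ifP. Qed.

Section G.
Variable s : tree.
Hypothesis ws : wf s.
Let n := arity s.
Lemma n_pos : 0 < n. Proof. exact: wf_arity. Qed.

Lemma rts_graft ts o j : all wf ts -> j < sar ts ->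
  rts (ggo s ts j) o = map (shf (o + j + 1) n) (rts ts o).
Proof.
elim: ts o j => [|u us IH] o j //; rewrite [all _ _]/= => /andP [wu wus] Hj.
have Hau := wf_arity wu.
rewrite [ggo s (u :: us) j]/=.
case: ifP => Hju.
  case: us IH wus Hj => [|v w] IH wus Hj //.
  have Hg := arity_graft s Hju.
  rewrite !rts_cons2 [map _ (_ :: _)]/=. rewrite {1}/shf ifF; last by lia.
  have -> : o + arity (graft u j s) = (o + arity u) + (n - 1).
    move: Hg (n_pos). rewrite /n. lia.
  rewrite rts_shift. congr (_ :: _); first by move: (n_pos); rewrite /n; lia.
  apply/eq_in_map => x Hx. have := rts_range wus Hx. move: (n_pos). rewrite /shf. case: ifP; lia.
have Hus : us <> [::] by case: us {IH} Hj wus => //=; rewrite /sar /=; lia.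
have Hgus : ggo s us (j - arity u) <> [::] by apply: ggo_nil.
rewrite !rts_cons // [map _ (_ :: _)]/=. rewrite {1}/shf ifT; last by lia.
rewrite IH //; last by move: Hj Hju; rewrite sar_cons; lia.
congr (_ :: _). have -> : o + arity u + (j - arity u) + 1 = o + j + 1 by lia. by [].
Qed.

Lemma graft_den_gen ts o j :
  allTr (fun t => forall o j, wf t -> j < arity t ->
     mP (shf (o + j + 1) n) (den t o) `|` den s (o + j) = den (graft t j s) o) ts ->
  all wf ts -> j < sar ts ->
  mP (shf (o + j + 1) n) (chs ts o) `|` den s (o + j) = chs (ggo s ts j) o.
Proof.
elim: ts o j => [|u us IH] o j //= [Hu Hus] /andP [wu wus] Hj.
have Hau := wf_arity wu.
rewrite mPU. case: ifP => Hju /=.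
  rewrite fsetUAC Hu //. congr (_ `|` _).
  have Hg := arity_graft s Hju.
  have -> : o + arity (graft u j s) = (o + arity u) + (n - 1) by move: Hg (n_pos); rewrite /n; lia.
  rewrite (chs_shift' us (o + arity u) (n - 1)) shP_mP. apply: eq_in_mP => B x HB Hx.
  have [_ Hr] := chs_range wus HB. have := Hr x Hx. move: (n_pos). rewrite /shf. case: ifP; lia.
rewrite -fsetUA. rewrite (@mP_id _ (den u o)); last first.
  move=> B x HB Hx. have [_ Hr] := den_range wu HB. have := Hr x Hx. rewrite /shf. case: ifP; lia.
congr (_ `|` _).
have Hj' : j - arity u < sar us by move: Hj Hju; rewrite sar_cons; lia.
rewrite -(IH (o + arity u) (j - arity u) Hus wus Hj').
have -> : o + arity u + (j - arity u) + 1 = o + j + 1 by lia.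
by have -> : o + arity u + (j - arity u) = o + j by lia.
Qed.

Lemma graft_den t o j : wf t -> j < arity t ->
  mP (shf (o + j + 1) n) (den t o) `|` den s (o + j) = den (graft t j s) o.
Proof.
elim/tree_ind': t o j => [|ts IH] o j.
  by case: j => //= _ _; rewrite mP0 fset0U addn0.
move=> Hw Hj; move: Hw; rewrite [wf _]/= => /andP [H2 wts].
rewrite graftN !denN mPU mP1 mb_blk -fsetUA rts_graft //.
congr (_ `|` _). exact: graft_den_gen.
Qed.
End G.

Lemma rts_nseq k o : rts (nseq k Leaf) o = iota o.+1 k.-1.
Proof.
elim: k o => [|[|k] IH] o //.
have -> : nseq k.+2 Leaf = Leaf :: nseq k.+1 Leaf by [].
rewrite rts_cons // IH /=. by rewrite addn1.
Qed.

Lemma chs_nseq k o : chs (nseq k Leaf) o = fset0.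
Proof. elim: k o => [|k IH] o //=. by rewrite IH fset0U. Qed.

Lemma pgen_den k : pgen k = den (Node (nseq k Leaf)) 0.
Proof. by rewrite denN chs_nseq fsetU0 rts_nseq. Qed.

Lemma evgo_cons u us pos X : evgo (u :: us) pos X = evgo us (pos + arity u) (ncomp pos (arity u) X (eval u)).
Proof. by []. Qed.

Lemma evgo_den us pre : all wf pre -> all wf us ->
  allTr (fun u => eval u = den u 0) us -> 2 <= size pre + size us ->
  evgo us (1 + sar pre) (den (Node (pre ++ nseq (size us) Leaf)) 0) = den (Node (pre ++ us)) 0.
Proof.
elim: us pre => [|u us IH] pre wpre; first by rewrite /= cats0.
rewrite [all _ _]/= [allTr _ _]/= => /andP [wu wus] [Hu Hus] Hsz.
have -> : nseq (size (u :: us)) Leaf = Leaf :: nseq (size us) Leaf by [].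
rewrite evgo_cons ncompE Hu.
have -> : mP (fun r => r + (1 + sar pre) - 1) (den u 0) = den u (0 + sar pre).
  rewrite den_shift shP_mP. apply: eq_in_mP => B x _ _. lia.
have -> : 1 + sar pre = 0 + sar pre + 1 by lia.
rewrite graft_den //; first last.
- rewrite arityN sar_cat sar_cons /=. lia.
- rewrite /= size_cat /= size_nseq. apply/andP; split; first by move: Hsz; rewrite /=; lia.
  rewrite all_cat wpre /=. by elim: (size us).
rewrite add0n graft_mid.
have -> : sar pre + 1 + arity u = 1 + sar (rcons pre u).
  rewrite -cats1 sar_cat sar_cons /sar /=. lia.
rewrite -!cat_rcons. apply: IH => //.
- by rewrite -cats1 all_cat wpre /= wu.
- move: Hsz; rewrite size_rcons /=; lia.
Qed.

Lemma eval_den t : wf t -> eval t = den t 0.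
Proof.
elim/tree_ind': t => [|ts IH] // Hw.
rewrite evalN.
rewrite pgen_den.
have := evgo_den ts [::] isT. rewrite cat0s add0n /sar /= => -> //.
- by move: Hw => /= /andP [].
- move: Hw => /= /andP [_]. elim: ts IH => //= u us IHl [Hu Hus] /andP [wu wus].
  split; [exact: Hu | exact: IHl].
- by move: Hw => /= /andP [].
Qed.


Lemma sar_nseq k : sar (nseq k Leaf) = k.
Proof. elim: k => //= k IH. by rewrite sar_cons IH. Qed.

Lemma arity_corolla k : arity (corolla k) = k.
Proof. exact: sar_nseq. Qed.

Lemma wf_nseq k : all wf (nseq k Leaf).
Proof. by elim: k. Qed.

Lemma wf_corolla k : 2 <= k -> wf (corolla k).
Proof. by move=> H; rewrite /= size_nseq H wf_nseq. Qed.

Theorem eval_graft t s j : wf t -> wf s -> j < arity t ->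
  eval (graft t j s) = ncomp j.+1 (arity s) (eval t) (eval s).
Proof.
move=> wt ws Hj.
rewrite !eval_den //; last by rewrite wf_graft // wt ws.
rewrite -graft_den // ncompE add0n addn1. congr (_ `|` _).
rewrite -[j]add0n den_shift shP_mP. apply: eq_in_mP => B x _ _. lia.
Qed.

Theorem eval_corolla n : 2 <= n -> eval (corolla n) = pgen n.
Proof. move=> H. by rewrite eval_den ?wf_corolla // pgen_den. Qed.

Lemma treq_inv {t t'} : treq t t' -> arity t = arity t' /\ wf t = wf t'.
Proof.
elim => {t t'}.
- by [].
- by move=> t t' _ [-> ->].
- by move=> t u v _ [-> ->] _ [-> ->].
- move=> m n Hm Hn.
  have H1 : m.-1 < arity (corolla m) by rewrite arity_corolla; lia.
  have H2 : 0 < arity (corolla n) by rewrite arity_corolla; lia.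
  have := arity_graft (corolla n) H1. have := arity_graft (corolla m) H2.
  rewrite !arity_corolla => E1 E2. split; first by lia.
  by rewrite !wf_graft // !wf_corolla.
- move=> t t' s s' j Hj _ [At Wt] _ [As Ws].
  have Hj' : j < arity t' by rewrite -At.
  have := arity_graft s Hj. have := arity_graft s' Hj'.
  move=> E1 E2. split; first by lia.
  by rewrite !wf_graft // Wt Ws.
Qed.

Theorem eval_treq t t' : treq t t' -> wf t -> eval t = eval t'.
Proof.
elim => {t t'}.
- by [].
- move=> t t' H IH Hw. have [_ W] := treq_inv H. by rewrite IH // W.
- move=> t u v H1 IH1 H2 IH2 Hw. have [_ W] := treq_inv H1.
  rewrite IH1 // IH2 // -W //.
- move=> m n Hm Hn _.
  have H1 : m.-1 < arity (corolla m) by rewrite arity_corolla; lia.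
  have H2 : 0 < arity (corolla n) by rewrite arity_corolla; lia.
  rewrite !eval_graft ?wf_corolla // !eval_corolla // !arity_corolla !ncompE.
  have -> : m.-1.+1 = m by lia.
  rewrite fsetUC. congr (_ `|` _); rewrite /pgen !mP1; congr [fset _];
   apply: eq_in_mb => x; rewrite in_blk mem_iota /shf; case: ifP; lia.
- move=> t t' s s' j Hj H1 IH1 H2 IH2 Hw.
  have Hw' := Hw. rewrite wf_graft // in Hw'. move/andP: Hw' => [wt ws].
  have [At Wt] := treq_inv H1. have [As Ws] := treq_inv H2.
  have Hj' : j < arity t' by rewrite -At.
  by rewrite !eval_graft // -?Wt -?Ws // IH1 // IH2 // As.
Qed.


Definition nonLeaf (t : tree) : bool := if t is Node _ then true else false.

Fixpoint nf (t : tree) : bool :=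
  match t with
  | Leaf => true
  | Node ts => match ts with
               | Leaf :: ((_ :: _) as cs) => all nf cs
               | _ => false
               end
  end.

Lemma nf_node cs : cs <> [::] -> nf (Node (Leaf :: cs)) = all nf cs.
Proof. by case: cs. Qed.

Definition RA xs y1 ys := Node (rcons xs (Node (y1 :: ys))).
Definition RB xs y1 ys := Node (Node (rcons xs y1) :: ys).

Lemma sar_rcons xs y : sar (rcons xs y) = sar xs + arity y.
Proof. by rewrite -cats1 sar_cat sar_cons /sar /= addn0. Qed.

Lemma arity_RA xs y1 ys : arity (RA xs y1 ys) = sar xs + arity y1 + sar ys.
Proof. by rewrite /RA arityN sar_rcons arityN sar_cons addnA. Qed.

Lemma arity_RB xs y1 ys : arity (RB xs y1 ys) = sar xs + arity y1 + sar ys.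
Proof. by rewrite /RB arityN sar_cons arityN sar_rcons. Qed.

Lemma gA1 pre post y1 ys s :
  graft (RA (pre ++ Leaf :: post) y1 ys) (sar pre) s = RA (pre ++ s :: post) y1 ys.
Proof. by rewrite /RA !rcons_cat !rcons_cons graft_mid. Qed.

Lemma gB1 pre post y1 ys s :
  graft (RB (pre ++ Leaf :: post) y1 ys) (sar pre) s = RB (pre ++ s :: post) y1 ys.
Proof.
rewrite /RB graft_first; last by rewrite arityN sar_rcons sar_cat sar_cons /=; lia.
by rewrite !rcons_cat !rcons_cons graft_mid.
Qed.

Lemma gA2 xs ys s : graft (RA xs Leaf ys) (sar xs) s = RA xs s ys.
Proof.
by rewrite /RA -!cats1 -[sar xs]addn0 graft_in //.
Qed.

Lemma gB2 xs ys s : graft (RB xs Leaf ys) (sar xs) s = RB xs s ys.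
Proof.
rewrite /RB graft_first; last by rewrite arityN sar_rcons /=; lia.
by rewrite -!cats1 graft_mid.
Qed.

Lemma gA3 xs y1 pre post s :
  graft (RA xs y1 (pre ++ Leaf :: post)) (sar xs + (arity y1 + sar pre)) s
  = RA xs y1 (pre ++ s :: post).
Proof.
rewrite /RA -!cats1 graft_in; last by rewrite arityN sar_cons sar_cat sar_cons /=; lia.
by rewrite -sar_cons -cat_cons graft_mid.
Qed.

Lemma gB3 xs y1 pre post s :
  graft (RB xs y1 (pre ++ Leaf :: post)) (sar xs + (arity y1 + sar pre)) s
  = RB xs y1 (pre ++ s :: post).
Proof.
rewrite /RB.
have -> : sar xs + (arity y1 + sar pre) = sar (Node (rcons xs y1) :: pre).
  by rewrite sar_cons arityN sar_rcons addnA.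
by rewrite -cat_cons graft_mid.
Qed.

Lemma split_has {l : seq tree} : has nonLeaf l ->
  exists pre s post, [/\ l = pre ++ s :: post, nonLeaf s &
     count nonLeaf l = (count nonLeaf (pre ++ Leaf :: post)).+1].
Proof.
elim: l => [|u l IH] //= /orP [Hu|Hl].
  exists [::], u, l. by rewrite Hu.
have [pre [s [post [E Hs Ec]]]] := IH Hl.
exists (u :: pre), s, post. by rewrite E /= -E Ec addnS.
Qed.

Lemma noleaf_nseq (l : seq tree) : count nonLeaf l = 0 -> l = nseq (size l) Leaf.
Proof. elim: l => [|[|ts] l IH] //= H. by rewrite -IH. Qed.

Lemma rcons_nseq k : rcons (nseq k Leaf) Leaf = nseq k.+1 Leaf.
Proof. by elim: k => //= k ->. Qed.

Lemma rot_base xs y1 ys : count nonLeaf (xs ++ y1 :: ys) = 0 ->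
  0 < size xs -> 0 < size ys -> treq (RA xs y1 ys) (RB xs y1 ys).
Proof.
rewrite count_cat /= => H Hx Hy.
have Ex : xs = nseq (size xs) Leaf by apply: noleaf_nseq; lia.
have Ey : ys = nseq (size ys) Leaf by apply: noleaf_nseq; lia.
have E1 : y1 = Leaf by case: y1 H => //= ? ; lia.
have := @treq_rel (size xs).+1 (size ys).+1 ltac:(lia) ltac:(lia).
have -> : graft (corolla (size xs).+1) (size xs).+1.-1 (corolla (size ys).+1) = RA xs y1 ys.
  have -> : corolla (size xs).+1 = Node (nseq (size xs) Leaf ++ Leaf :: [::]).
    by rewrite cats1 rcons_nseq.
  have -> : (size xs).+1.-1 = sar (nseq (size xs) Leaf) by rewrite sar_nseq.
  rewrite graft_mid /RA E1 cats1 -Ex. congr (Node (rcons _ _)). rewrite /corolla. congr Node.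
  by rewrite [in RHS]Ey.
have -> : graft (corolla (size ys).+1) 0 (corolla (size xs).+1) = RB xs y1 ys.
  have -> : corolla (size ys).+1 = Node ([::] ++ Leaf :: nseq (size ys) Leaf) by [].
  rewrite (graft_mid [::]) /= /RB E1 -Ey. congr (Node (_ :: _)).
  by rewrite /corolla -rcons_nseq -Ex.
by [].
Qed.

Lemma rot_gen k xs y1 ys : count nonLeaf (xs ++ y1 :: ys) <= k ->
  0 < size xs -> 0 < size ys -> treq (RA xs y1 ys) (RB xs y1 ys).
Proof.
elim: k xs y1 ys => [|k IH] xs y1 ys Hc Hx Hy.
  by apply: rot_base => //; lia.
case Hh: (has nonLeaf (xs ++ y1 :: ys)); last first.
  apply: rot_base => //. by apply/eqP; rewrite eqn0Ngt -has_count Hh.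
move: Hh; rewrite has_cat /= => /orP [Hxs|/orP [H1|Hys]].
- have [pre [s [post [E Hs Ec]]]] := split_has Hxs. subst xs.
  rewrite -gA1 -gB1. apply: treq_graft; last by apply: treq_refl.
    rewrite arity_RA sar_cat sar_cons /=; lia.
  apply: IH; last by [].
    move: Hc. rewrite (count_cat nonLeaf (pre ++ s :: post)) Ec addSn ltnS.
    by rewrite (count_cat nonLeaf (pre ++ Leaf :: post)).
  move: Hx; rewrite !size_cat /=; lia.
- rewrite -gA2 -gB2. apply: treq_graft; last by apply: treq_refl.
    rewrite arity_RA /=; lia.
  apply: IH => //. move: Hc; rewrite !count_cat /= H1; lia.
- have [pre [s [post [E Hs Ec]]]] := split_has Hys. subst ys.
  rewrite -gA3 -gB3. apply: treq_graft; last by apply: treq_refl.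
    rewrite arity_RA sar_cat sar_cons /=; lia.
  apply: IH => //.
    move: Hc. rewrite !count_cat /=. rewrite Ec /=. lia.
  move: Hy; rewrite !size_cat /=; lia.
Qed.

Lemma rot xs y1 ys : 0 < size xs -> 0 < size ys -> treq (RA xs y1 ys) (RB xs y1 ys).
Proof. exact: rot_gen. Qed.

Fixpoint tsz (t : tree) : nat :=
  match t with Leaf => 1 | Node ts => (sumn (map tsz ts)).+1 end.

Lemma tsize_pos t : 0 < tsz t. Proof. by case: t. Qed.

Lemma treq_child pre c c' post : treq c c' ->
  treq (Node (pre ++ c :: post)) (Node (pre ++ c' :: post)).
Proof.
move=> H. rewrite -(graft_mid pre post c) -(graft_mid pre post c'). apply: treq_graft => //; last by apply: treq_refl.
rewrite arityN sar_cat sar_cons /=; lia.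
Qed.

Lemma nf_list N :
  (forall t, tsz t <= N -> wf t -> exists t', [/\ nf t', wf t' & treq t t']) ->
  forall cs pre, sumn (map tsz cs) <= N -> all wf cs ->
  exists cs', [/\ size cs' = size cs, all nf cs', all wf cs' &
                 treq (Node (pre ++ cs)) (Node (pre ++ cs'))].
Proof.
move=> IH; elim=> [|c cs IHl] pre Hs Hw.
  exists [::]; split => //; exact: treq_refl.
move: Hw => /= /andP [wc wcs]. move: Hs => /= Hs.
have [c' [nc wc' Hc]] := IH c ltac:(lia) wc.
have [cs' [Sz ncs wcs' Hcs]] := IHl (rcons pre c') ltac:(lia) wcs.
exists (c' :: cs'); split => //=; first by rewrite Sz.
- by rewrite nc ncs.
- by rewrite wc' wcs'.
apply: (treq_trans (treq_child pre c c' cs Hc)).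
by rewrite -!cat_rcons.
Qed.

Lemma sumn_rcons (l : seq nat) x : sumn (rcons l x) = sumn l + x.
Proof. by rewrite -cats1 sumn_cat /= addn0. Qed.

Lemma nf_node_exists N :
  (forall t, tsz t <= N -> wf t -> exists t', [/\ nf t', wf t' & treq t t']) ->
  forall M c cs, tsz c <= M -> cs <> [::] -> wf c -> all wf cs ->
  tsz (Node (c :: cs)) <= N.+1 -> exists t', [/\ nf t', wf t' & treq (Node (c :: cs)) t'].
Proof.
move=> IH; elim=> [|M IHM] c cs Hc Hcs wc wcs Hsz.
  by move: (tsize_pos c); lia.
have Hcs0 : 0 < size cs by case: cs Hcs {wcs Hsz}.
case: c Hc wc Hsz => [|ds] Hc wc Hsz.
  have [cs'' [Sz ncs wcs'' Heq]] := nf_list N IH cs [:: Leaf] ltac:(move: Hsz => /=; lia) wcs.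
  have Hne : cs'' <> [::] by move=> E; move: Sz Hcs0; rewrite E /= => <-.
  exists (Node (Leaf :: cs'')); split => //.
  - by rewrite nf_node.
  - rewrite /= wcs'' andbT. by case: cs'' Hne {Sz Heq ncs wcs''}.
move: wc => /= /andP [H2 wds].
case/lastP: ds H2 wds Hc Hsz => [|ds0 dr] //. rewrite size_rcons => H2 wds Hc Hsz.
case: ds0 H2 wds Hc Hsz => [|d1 ds1] // _ wds Hc Hsz.
have Hrot : treq (Node (Node (rcons (d1 :: ds1) dr) :: cs)) (Node (d1 :: rcons ds1 (Node (dr :: cs)))).
  apply: treq_sym. rewrite -rcons_cons. apply: (rot (d1 :: ds1) dr cs) => //.
move: wds; rewrite -cats1 all_cat /= andbT => /andP [/andP [wd1 wds1] wdr].
have Hs1 : tsz d1 <= M.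
  move: Hc; rewrite /= -cats1 map_cat sumn_cat /=; lia.
have Hne : rcons ds1 (Node (dr :: cs)) <> [::] by case: ds1 {Hc Hsz Hrot wds1}.
have Hw2 : all wf (rcons ds1 (Node (dr :: cs))).
  by rewrite -cats1 all_cat wds1 /= wdr wcs ltnS Hcs0.
have Hsz2 : tsz (Node (d1 :: rcons ds1 (Node (dr :: cs)))) <= N.+1.
  move: Hsz; rewrite /= -!cats1 !map_cat !sumn_cat /=; lia.
have [t'' [n'' w'' H'']] := IHM d1 _ Hs1 Hne wd1 Hw2 Hsz2.
exists t''; split => //. rewrite cats1. exact: (treq_trans Hrot H'').
Qed.

Theorem nf_exists N t : tsz t <= N -> wf t -> exists t', [/\ nf t', wf t' & treq t t'].
Proof.
elim: N t => [|N IH] t; first by move: (tsize_pos t); lia.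
case: t => [|ts] Hs Hw; first by exists Leaf; split => //; exact: treq_refl.
move: Hw => /= /andP [H2 Hall].
case: ts H2 Hall Hs => [|c [|c2 cs0]] // _ /andP [wc wcs] Hs.
exact: (nf_node_exists N IH (tsz c) c (c2 :: cs0)).
Qed.


Inductive PART (lo hi : nat) (P : partition_set) : Prop :=
  PartI of (forall B, B \in P -> B != fset0)
    & (forall B C x, B \in P -> C \in P -> x \in B -> x \in C -> B = C)
    & (forall x, (exists2 B, B \in P & x \in B) <-> lo <= x < hi).

Definition NCR (P : partition_set) : Prop :=
  forall B C a b c d, B \in P -> C \in P -> a \in B -> b \in B -> c \in C -> d \in C ->
    a < c -> c < b -> b < d -> B = C.

Notation NCPR lo hi P := (PART lo hi P /\ NCR P).

Lemma NCP_NCPR n P : 1 <= n -> NCPR 1 n P -> NCP n P.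
Proof.
move=> Hn [[H1 H2 H3] H4]; rewrite /NCP /is_partition /noncrossing; split => //.
- split => //.
  + move=> B C HB HC HBC. apply/fsetP => x; rewrite in_fset0.
    rewrite in_fsetI; apply/negbTE/negP => /andP [xB xC]. by move: HBC; rewrite (H2 B C x) // eqxx.
  + move=> x; rewrite H3. lia.
- move=> B C a b c d HB HC HBC Ha Hb Hc Hd. apply/negP => /and3P [h1 h2 h3].
  by move: HBC; rewrite (H4 B C a b c d) // eqxx.
Qed.

Lemma NCPR_NCP n P : NCP n P -> NCPR 1 n P.
Proof.
rewrite /NCP /is_partition /noncrossing; move=> [Hn [H1 H2 H3] H4]; split; first split => //.
- move=> B C x HB HC xB xC. apply/eqP; apply/negPn/negP => HBC.
  have := H2 B C HB HC HBC. move/fsetP/(_ x). by rewrite in_fset0 in_fsetI xB xC.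
- move=> x; rewrite H3. lia.
- move=> B C a b c d HB HC Ha Hb Hc Hd h1 h2 h3. apply/eqP; apply/negPn/negP => HBC.
  have := H4 B C a b c d HB HC HBC Ha Hb Hc Hd. by rewrite h1 h2 h3.
Qed.

Lemma PART_range lo hi P B x : PART lo hi P -> B \in P -> x \in B -> lo <= x < hi.
Proof. move=> [_ _ H3] HB Hx. apply/H3. by exists B. Qed.

Lemma NCPR_empty {lo P} : NCPR lo lo P -> P = fset0.
Proof.
move=> [[H1 _ H3] _]. apply/fsetP => B; rewrite in_fset0. apply/negP => HB.
have /fset0Pn [x Hx] := H1 B HB. have : lo <= x < lo by apply/H3; exists B. lia.
Qed.

Lemma NCPR_fset0 lo : NCPR lo lo fset0.
Proof.
split; first split.
- by move=> B; rewrite in_fset0.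
- by move=> B C x; rewrite in_fset0.
- move=> x; split; first by move=> [B]; rewrite in_fset0.
  lia.
- by move=> B C a b c d; rewrite in_fset0.
Qed.

Lemma glue1 s e Q : NCPR s.+1 e Q -> s < e -> NCPR s e ([fset [fset s]] `|` Q).
Proof.
move=> [[H1 H2 H3] H4] Hse.
have HQ : forall B x, B \in Q -> x \in B -> s < x < e.
  move=> B x HB Hx. have : s.+1 <= x < e by apply/H3; exists B. lia.
split; first split.
- move=> B; rewrite in_fsetU in_fset1 => /orP [/eqP ->|HB]; last exact: H1.
  apply/fset0Pn; exists s; exact: fset11.
- move=> B C x; rewrite !in_fsetU !in_fset1 => /orP [/eqP ->|HB] /orP [/eqP ->|HC] // xB xC.
  + move: xB; rewrite in_fset1 => /eqP Ex. have := HQ C x HC xC. lia.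
  + move: xC; rewrite in_fset1 => /eqP Ex. have := HQ B x HB xB. lia.
  + exact: H2 xB xC.
- move=> x; split.
  + move=> [B]; rewrite in_fsetU in_fset1 => /orP [/eqP ->|HB] Hx.
    * move: Hx; rewrite in_fset1 => /eqP ->. lia.
    * have := HQ B x HB Hx. lia.
  + move=> Hx. case: (eqVneq x s) => [->|Hxs].
    * exists [fset s]; last exact: fset11. by rewrite in_fsetU in_fset1 eqxx.
    * have [B HB xB] : exists2 B, B \in Q & x \in B by apply/H3; lia.
      exists B => //. by rewrite in_fsetU HB orbT.
- move=> B C a b c d; rewrite !in_fsetU !in_fset1 => /orP [/eqP ->|HB] /orP [/eqP ->|HC] //.
  + move=> Ha Hb _ _. move: Ha Hb; rewrite !in_fset1 => /eqP -> /eqP ->. lia.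
  + move=> _ _ Hc Hd. move: Hc Hd; rewrite !in_fset1 => /eqP -> /eqP ->. lia.
  + exact: H4.
Qed.

Lemma glue2 s m e Q1 RB Q2c :
  NCPR s.+1 m Q1 -> NCPR m e ([fset RB] `|` Q2c) -> m \in RB ->
  (forall B, B \in Q2c -> m \notin B) -> s < m ->
  NCPR s e ([fset s |` RB] `|` (Q1 `|` Q2c)).
Proof.
move=> [[A1 A2 A3] A4] [[B1 B2 B3] B4] mRB Hm Hsm.
have RBin : RB \in [fset RB] `|` Q2c by rewrite in_fsetU in_fset1 eqxx.
have Q2in : forall C, C \in Q2c -> C \in [fset RB] `|` Q2c by move=> C HC; rewrite in_fsetU HC orbT.
have HQ1 : forall B x, B \in Q1 -> x \in B -> s < x < m.
  move=> B x HB Hx. have : s.+1 <= x < m by apply/A3; exists B. lia.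
have HRB : forall x, x \in RB -> m <= x < e.
  move=> x Hx. apply/B3. by exists RB.
have HQ2 : forall B x, B \in Q2c -> x \in B -> m < x < e.
  move=> B x HB Hx. have : m <= x < e by apply/B3; exists B => //; apply: Q2in.
  have : x != m by apply: contraNneq (Hm B HB) => <-.
  lia.
have HneRB : forall C, C \in Q2c -> C <> RB by move=> C HC E; move: (Hm C HC); rewrite E mRB.
set R := s |` RB.
have inR : forall x, x \in R = (x == s) || (x \in RB) by move=> x; rewrite in_fset1U.
have Rge : forall x, x \in R -> s <= x.
  move=> x; rewrite inR => /orP [/eqP ->//|Hx]. have := HRB x Hx. lia.
have Rsep : forall C x, C \in Q1 `|` Q2c -> x \in R -> x \in C -> False.
  move=> C x; rewrite in_fsetU inR => /orP [HC|HC] /orP [/eqP ->|xR] xC.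
  - have := HQ1 C s HC xC. lia.
  - have := HQ1 C x HC xC. have := HRB x xR. lia.
  - have := HQ2 C s HC xC. lia.
  - have E := B2 RB C x RBin (Q2in C HC) xR xC. exact: (HneRB C HC (esym E)).
have Qsep : forall B C x, B \in Q1 -> C \in Q2c -> x \in B -> x \in C -> False.
  move=> B C x HB HC xB xC. have := HQ1 B x HB xB. have := HQ2 C x HC xC. lia.
split; first split.
- move=> B; rewrite in_fsetU in_fset1 => /orP [/eqP ->|]; first by apply/fset0Pn; exists s; rewrite inR eqxx.
  rewrite in_fsetU => /orP [HB|HB]; [exact: A1|exact: B1 (Q2in B HB)].
- move=> B C x; rewrite !in_fsetU !in_fset1 => /orP [/eqP ->|HB] /orP [/eqP ->|HC] // xB xC.
  + by case: (Rsep C x _ xB xC); rewrite in_fsetU.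
  + by case: (Rsep B x _ xC xB); rewrite in_fsetU.
  + move: HB HC => /orP [HB|HB] /orP [HC|HC].
    * exact: A2 xB xC.
    * by case: (Qsep B C x HB HC xB xC).
    * by case: (Qsep C B x HC HB xC xB).
    * exact: B2 (Q2in B HB) (Q2in C HC) xB xC.
- move=> x; split.
  + move=> [B]; rewrite !in_fsetU in_fset1 => /orP [/eqP ->|/orP [HB|HB]] Hx.
    * move: Hx; rewrite inR => /orP [/eqP ->|Hx]; last by have := HRB x Hx; lia.
      have := HRB m mRB. lia.
    * have := HQ1 B x HB Hx. have := HRB m mRB. lia.
    * have := HQ2 B x HB Hx. lia.
  + move=> Hx. case: (ltnP x m) => Hxm.
    * case: (eqVneq x s) => [->|Hxs].
        exists R; last by rewrite inR eqxx. by rewrite in_fsetU in_fset1 eqxx.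
      have [B HB xB] : exists2 B, B \in Q1 & x \in B by apply/A3; lia.
      exists B => //. by rewrite !in_fsetU HB orbT.
    * have [B HB xB] : exists2 B, B \in [fset RB] `|` Q2c & x \in B by apply/B3; lia.
      move: HB; rewrite in_fsetU in_fset1 => /orP [/eqP EB|HB].
        exists R; last by rewrite inR -EB xB orbT. by rewrite in_fsetU in_fset1 eqxx.
      exists B => //. by rewrite !in_fsetU HB !orbT.
- move=> B C a b c d; rewrite !in_fsetU !in_fset1.
  move=> /orP [/eqP EB|/orP [HB|HB]] /orP [/eqP EC|/orP [HC|HC]] Ha Hb Hc Hd h1 h2 h3;
    try (by rewrite EB EC).
  +
    subst B. have := HQ1 C d HC Hd. have := Rge a Ha. move: Hb; rewrite inR => /orP [/eqP Eb|Hb]; first lia.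
    have := HRB b Hb. lia.
  +
    subst B. exfalso.
    have Hb' : b \in RB by move: Hb; rewrite inR => /orP [/eqP Eb|//]; have := Rge a Ha; lia.
    have [a' Ha' Ha'c] : exists2 a', a' \in RB & a' < c.
      move: Ha; rewrite inR => /orP [/eqP Ea|Ha]; last by exists a.
      exists m => //. have := HQ2 C c HC Hc. lia.
    have E := B4 RB C a' b c d RBin (Q2in C HC) Ha' Hb' Hc Hd Ha'c h2 h3.
    exact: (HneRB C HC (esym E)).
  +
    subst C. have := HQ1 B a HB Ha. have := HQ1 B b HB Hb.
    move: Hc; rewrite inR => /orP [/eqP Ec|Hc]; first lia.
    have := HRB c Hc. lia.
  + exact: A4 Ha Hb Hc Hd h1 h2 h3.
  + exfalso. have := HQ1 B a HB Ha. have := HQ1 B b HB Hb. have := HQ2 C c HC Hc. lia.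
  +
    subst C. exfalso.
    have HA := HQ2 B a HB Ha.
    have Hc' : c \in RB by move: Hc; rewrite inR => /orP [/eqP|//]; lia.
    have Hd' : d \in RB by move: Hd; rewrite inR => /orP [/eqP|//]; lia.
    have E := B4 B RB a b c d (Q2in B HB) RBin Ha Hb Hc' Hd' h1 h2 h3.
    exact: (HneRB B HB E).
  + exfalso. have := HQ2 B a HB Ha. have := HQ2 B b HB Hb. have := HQ1 C c HC Hc. lia.
  + exact: B4 (Q2in B HB) (Q2in C HC) Ha Hb Hc Hd h1 h2 h3.
Qed.


Definition Lden cs s := [fset blk (s :: rts cs s)] `|` chs cs s.

Lemma den_Lden cs o : cs <> [::] -> den (Node (Leaf :: cs)) o = Lden cs o.+1.
Proof. move=> H. by rewrite denN rts_cons // /= fset0U addn1. Qed.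

Lemma blk_cons x l : blk (x :: l) = x |` blk l.
Proof. apply/fsetP => y. by rewrite in_fset1U !in_blk inE. Qed.

Lemma blk1 x : blk [:: x] = [fset x].
Proof. apply/fsetP => y. by rewrite in_fset1 !in_blk inE. Qed.

Lemma Lden_one c s : Lden [:: c] s = [fset [fset s]] `|` den c s.
Proof. by rewrite /Lden /= fsetU0 blk1. Qed.

Lemma Lden_cons c cs s : cs <> [::] -> Lden (c :: cs) s =
  [fset s |` blk ((s + arity c) :: rts cs (s + arity c))] `|` (den c s `|` chs cs (s + arity c)).
Proof. move=> H. by rewrite /Lden rts_cons // blk_cons. Qed.

Lemma nfN ts : nf (Node ts) -> exists cs, [/\ ts = Leaf :: cs, cs <> [::] & all nf cs].
Proof. case: ts => [|[|u] [|v w]] //= H. by exists (v :: w). Qed.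

Lemma Lden_NCPR cs s :
  allTr (fun t => forall o, nf t -> wf t -> NCPR o.+1 (o + arity t) (den t o)) cs ->
  cs <> [::] -> all nf cs -> all wf cs -> NCPR s (s + sar cs) (Lden cs s).
Proof.
elim: cs s => [|c cs1 IH] s // [Hc Hcs1] _ /= /andP [nc ncs] /andP [wc wcs].
have Ha := wf_arity wc.
case: cs1 IH Hcs1 ncs wcs => [|c2 cs2] IH Hcs1 ncs wcs.
  rewrite Lden_one sar_cons /sar /= addn0. apply: glue1; [exact: Hc | lia].
rewrite Lden_cons // sar_cons. apply: glue2.
- exact: Hc.
- rewrite addnA. exact: IH.
- by rewrite in_blk mem_head.
- move=> B HB. have [_ Hr] := chs_range wcs HB. apply/negP => Hm. have := Hr _ Hm. lia.
- lia.
Qed.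

Theorem den_NCPR t o : nf t -> wf t -> NCPR o.+1 (o + arity t) (den t o).
Proof.
elim/tree_ind': t o => [|ts IH] o.
  move=> _ _. rewrite /= addn1. exact: NCPR_fset0.
move=> /nfN [cs [E Hne ncs]] Hw. subst ts.
rewrite den_Lden // arityN sar_cons /=.
have -> : o + (1 + sar cs) = o.+1 + sar cs by lia.
move: Hw => /= /andP [_ wcs].
apply: Lden_NCPR => //. by case: IH.
Qed.


Definition INJ t := forall t' o, nf t -> wf t -> nf t' -> wf t' -> arity t = arity t' ->
  den t o = den t' o -> t = t'.

Lemma Lroot cs s B : all wf cs -> B \in Lden cs s -> s \in B -> B = blk (s :: rts cs s).
Proof.
rewrite /Lden in_fsetU in_fset1 => Hw /orP [/eqP //|HB] Hs.
have [_ Hr] := chs_range Hw HB. have := Hr s Hs. lia.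
Qed.

Lemma char1 c cs1 s B : wf c -> all wf cs1 ->
  (B \in den c s) = [&& B \in Lden (c :: cs1) s, s \notin B & all (fun x => x < s + arity c) B].
Proof.
move=> wc wcs. apply/idP/and3P.
- move=> HB. have [_ Hr] := den_range wc HB. split.
  + by rewrite /Lden /= !in_fsetU HB orbT.
  + apply/negP => Hs. have := Hr s Hs. lia.
  + apply/allP => x Hx. have := Hr x Hx. lia.
- rewrite /Lden /= !in_fsetU in_fset1 => -[/orP [/eqP ->|/orP [//|HB]]].
    by rewrite in_blk mem_head.
  move=> _ /allP Ha. have [Hne Hr] := chs_range wcs HB.
  have /fset0Pn [x Hx] := Hne. have := Hr x Hx. have := Ha x Hx. lia.
Qed.

Lemma root_D1 c cs1 s : wf c -> all wf cs1 -> cs1 <> [::] ->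
  blk (s :: rts (c :: cs1) s) `\ s = blk ((s + arity c) :: rts cs1 (s + arity c)).
Proof.
move=> wc wcs Hne. have Ha := wf_arity wc.
rewrite rts_cons // blk_cons fsetU1K // in_blk inE negb_or. apply/andP; split.
  apply/eqP; lia.
apply/negP => H. have := rts_range wcs H. lia.
Qed.

Lemma char2 c cs1 s B : wf c -> all wf cs1 -> cs1 <> [::] ->
  (B \in Lden cs1 (s + arity c)) = (B == blk (s :: rts (c :: cs1) s) `\ s) ||
     [&& B \in Lden (c :: cs1) s, B != fset0 & all (fun x => s + arity c < x) B].
Proof.
move=> wc wcs Hne. have Ha := wf_arity wc.
rewrite root_D1 // {1}/Lden in_fsetU in_fset1. congr (_ || _).
apply/idP/and3P.
- move=> HB. have [Hne' Hr] := chs_range wcs HB. split => //.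
  + by rewrite /Lden /= !in_fsetU HB !orbT.
  + apply/allP => x Hx. have := Hr x Hx. lia.
- rewrite /Lden /= !in_fsetU in_fset1 => -[/orP [/eqP ->|/orP [HB|//]]].
    by move=> _ /allP /(_ s); rewrite in_blk mem_head => /(_ isT); lia.
  move=> Hne' /allP Hal. have [_ Hr] := den_range wc HB.
  have /fset0Pn [x Hx] := Hne'. have := Hr x Hx. have := Hal x Hx. lia.
Qed.

Lemma root_ge u u' l l' s : wf u -> all wf l' -> l' <> [::] -> l <> [::] ->
  blk (s :: rts (u' :: l') s) = blk (s :: rts (u :: l) s) -> arity u' <= arity u.
Proof.
move=> wu wl' Hl' Hl E.
move/fsetP: E => /(_ (s + arity u)). rewrite !in_blk (rts_cons u') // (rts_cons u) //.
have := wf_arity wu.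
rewrite !inE eqxx orbT /= => Hu /orP [/eqP E1|/orP [/eqP E2|H]].
+ lia.
+ lia.
+ have := rts_range wl' H. lia.
Qed.

Lemma Linj cs : allTr INJ cs -> forall cs' s, cs <> [::] -> cs' <> [::] ->
  all nf cs -> all wf cs -> all nf cs' -> all wf cs' -> sar cs = sar cs' ->
  Lden cs s = Lden cs' s -> cs = cs'.
Proof.
elim: cs => [|c cs1 IH] // [Ic Ics1] [|c' cs1'] s // _ _ /andP [nc ncs] /andP [wc wcs]
  /andP [nc' ncs'] /andP [wc' wcs'] Hsar HL.
have Hroot : blk (s :: rts (c' :: cs1') s) = blk (s :: rts (c :: cs1) s).
  apply: Lroot; first by apply/andP.
    by rewrite HL /Lden in_fsetU in_fset1 eqxx.
  by rewrite in_blk mem_head.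
have Ha := wf_arity wc. have Ha' := wf_arity wc'.
case: cs1 IH Ics1 ncs wcs Hsar HL Hroot => [|d ds] IH Ics1 ncs wcs Hsar HL Hroot;
case: cs1' ncs' wcs' Hsar HL Hroot => [|d' ds'] ncs' wcs' Hsar HL Hroot.
- move: Hsar; rewrite !sar_cons /sar /= !addn0 => Har.
  have Hd : den c s = den c' s.
    apply/fsetP => B. by rewrite (char1 c [::]) // (char1 c' [::]) // HL Har.
  by rewrite (Ic c' s) //.
- exfalso. move/fsetP: Hroot => /(_ (s + arity c')).
  rewrite !in_blk (rts_cons c') // !inE eqxx orbT /=. lia.
- exfalso. move/fsetP: Hroot => /(_ (s + arity c)).
  rewrite !in_blk (rts_cons c) // !inE eqxx orbT /=. lia.
- have A1 := root_ge c c' (d :: ds) (d' :: ds') s wc wcs' ltac:(by []) ltac:(by []) Hroot.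
  have A2 := root_ge c' c (d' :: ds') (d :: ds) s wc' wcs ltac:(by []) ltac:(by []) (esym Hroot).
  have Har : arity c = arity c' by lia.
  have Hd : den c s = den c' s.
    apply/fsetP => B. by rewrite (char1 c (d :: ds)) // (char1 c' (d' :: ds')) // HL Har.
  have Ec : c = c' by rewrite (Ic c' s) //.
  subst c'. congr (_ :: _).
  have Hs2 : sar (d :: ds) = sar (d' :: ds') by move: Hsar; rewrite !sar_cons; lia.
  have HL2 : Lden (d :: ds) (s + arity c) = Lden (d' :: ds') (s + arity c).
    apply/fsetP => B. rewrite (char2 c (d :: ds)) // (char2 c (d' :: ds')) //.
    by rewrite HL Hroot.
  exact: (IH Ics1 (d' :: ds') (s + arity c) ltac:(by []) ltac:(by []) ncs wcs ncs' wcs' Hs2 HL2).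
Qed.

Theorem nf_inj t : INJ t.
Proof.
elim/tree_ind': t => [|ts IH].
  move=> [|ts'] o // _ _ _ wt' Ha _. have := wf_arity2 wt'. rewrite -Ha. by [].
move=> [|ts'] o /nfN [cs [E Hne ncs]] wt.
  move=> _ _ Ha. have := wf_arity2 wt. rewrite Ha. by [].
move=> /nfN [cs' [E' Hne' ncs']] wt' Ha Hd. subst ts ts'.
move: wt wt' => /= /andP [_ wcs] /andP [_ wcs'].
rewrite !den_Lden // in Hd.
rewrite (Linj cs _ cs' o.+1) //.
- by case: IH.
- move: Ha; rewrite !arityN !sar_cons. lia.
Qed.


Definition filt (l h : nat) (P : partition_set) : partition_set :=
  [fset B in P | all (fun x => (l <= x) && (x < h)) B].

Lemma in_filt l h P B : (B \in filt l h P) = (B \in P) && all (fun x => (l <= x) && (x < h)) B.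
Proof. by rewrite /filt !inE. Qed.

Lemma restrict {lo hi} l h {P} : NCPR lo hi P -> lo <= l -> h <= hi ->
  (forall C x y, C \in P -> x \in C -> y \in C -> (l <= x < h) = (l <= y < h)) ->
  NCPR l h (filt l h P).
Proof.
move=> [[A1 A2 A3] A4] Hl Hh Hc. split; first split.
- move=> B; rewrite in_filt => /andP [HB _]; exact: A1.
- move=> B C x; rewrite !in_filt => /andP [HB _] /andP [HC _]; exact: A2.
- move=> x; split.
  + move=> [B]; rewrite in_filt => /andP [_ /allP Ha] Hx. exact: Ha.
  + move=> Hx. have [C HC xC] : exists2 C, C \in P & x \in C by apply/A3; lia.
    exists C => //. rewrite in_filt HC /=. apply/allP => y Hy. by rewrite -(Hc C x y).
- move=> B C a b c d; rewrite !in_filt => /andP [HB _] /andP [HC _]; exact: A4.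
Qed.

Definition rem1 (s : nat) (P : partition_set) : partition_set :=
  [fset B `\ s | B : {fset nat} in P] `\` [fset fset0].

Lemma in_rem1 s P C : C \in rem1 s P <-> C != fset0 /\ exists2 B, B \in P & C = B `\ s.
Proof.
rewrite /rem1 in_fsetD in_fset1. split.
- move=> /andP [Hne H]. move: H => /imfsetP /= [B HB EC]. split => //. by exists B.
- move=> [Hne [B HB EC]]. rewrite Hne /=. apply/imfsetP. by exists B.
Qed.

Lemma D1_notin (C : {fset nat}) s : s \notin C -> C `\ s = C.
Proof.
move=> H. apply/fsetP => x. rewrite in_fsetD1. case: eqVneq => // ->. by rewrite (negbTE H).
Qed.

Lemma rem1_NCPR {s e P} : NCPR s e P -> NCPR s.+1 e (rem1 s P).
Proof.
move=> [[A1 A2 A3] A4]. split; first split.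
- by move=> C /in_rem1 [].
- move=> C1 C2 x /in_rem1 [_ [B1 HB1 ->]] /in_rem1 [_ [B2 HB2 ->]].
  rewrite !in_fsetD1 => /andP [_ x1] /andP [_ x2]. by rewrite (A2 B1 B2 x).
- move=> x; split.
  + move=> [C /in_rem1 [_ [B HB ->]]]. rewrite in_fsetD1 => /andP [Hxs xB].
    have : s <= x < e by apply/A3; exists B. move: Hxs => /eqP. lia.
  + move=> Hx. have [B HB xB] : exists2 B, B \in P & x \in B by apply/A3; lia.
    exists (B `\ s); last by rewrite in_fsetD1 xB andbT; apply/eqP; lia.
    apply/in_rem1; split; last by exists B.
    apply/fset0Pn; exists x. rewrite in_fsetD1 xB andbT; apply/eqP; lia.
- move=> C1 C2 a b c d /in_rem1 [_ [B1 HB1 ->]] /in_rem1 [_ [B2 HB2 ->]].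
  rewrite !in_fsetD1 => /andP [_ Ha] /andP [_ Hb] /andP [_ Hc] /andP [_ Hd] h1 h2 h3.
  by rewrite (A4 B1 B2 a b c d).
Qed.

Definition LPprop (M : nat) := forall s e P, e - s <= M -> s < e -> NCPR s e P ->
  exists cs, [/\ cs <> [::], all nf cs, all wf cs, sar cs = e - s & Lden cs s = P].

Lemma TP {M} : LPprop M -> forall o a P, 0 < a -> a.-1 <= M -> NCPR o.+1 (o + a) P ->
  exists t, [/\ nf t, wf t, arity t = a & den t o = P].
Proof.
move=> HLP o a P Ha HaM HP.
case: (ltnP 1 a) => Ha2; last first.
  have E : a = 1 by lia. subst a.
  rewrite addn1 in HP. have -> := NCPR_empty HP. by exists Leaf.
have [cs [Hne ncs wcs Hsar HL]] := HLP o.+1 (o + a) P ltac:(lia) ltac:(lia) HP.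
exists (Node (Leaf :: cs)); split.
- by rewrite nf_node.
- rewrite /= wcs andbT. by case: cs Hne {ncs wcs Hsar HL}.
- rewrite arityN sar_cons Hsar /=. lia.
- by rewrite den_Lden.
Qed.

Ltac clear_nonarith := repeat match goal with
  | H : ?P |- _ => lazymatch P with
      | is_true (_ <= _) => fail
      | is_true (_ && _) => fail
      | is_true (_ == _) => fail
      | is_true (_ != _) => fail
      | @eq nat _ _ => fail
      | nat => fail
      | _ => clear H
      end
  end.
Ltac slia := clear_nonarith; lia.

Theorem LP N : LPprop N.
Proof.
elim: N => [|N IH] s e P Hse Hlt; first slia.
move=> HP. have HP0 := HP. move: HP0 => [[P1 P2 P3] P4].
have [R HR sR] : exists2 R, R \in P & s \in R by apply/P3; slia.
have HP' := rem1_NCPR HP.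
have HTP := TP IH.
have Rrange : forall x, x \in R -> s <= x < e by move=> x Hx; apply/P3; exists R.
have notR : forall C, C \in P -> C != R -> s \notin C.
  move=> C HC HCR. apply/negP => sC. by move: HCR; rewrite (P2 C R s) ?eqxx.
case: (eqVneq (R `\ s) fset0) => HRs.
-
  have ER : R = [fset s] by rewrite -(fsetD1K sR) HRs fsetU0.
  have [c [nc wc Hac Hdc]] := HTP s (e - s) (rem1 s P) ltac:(slia) ltac:(slia)
     ltac:(by rewrite subnKC // ltnW).
  exists [:: c]; split => //=.
  + by rewrite nc.
  + by rewrite wc.
  + by rewrite sar_cons /sar /= addn0.
  rewrite Lden_one Hdc. apply/fsetP => B. rewrite in_fsetU in_fset1.
  apply/idP/idP.
  + move=> /orP [/eqP ->|/in_rem1 [Hne [C HC EB]]]; first by rewrite -ER.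
    case: (eqVneq C R) => [ECR|HCR]; first by move: Hne; rewrite EB ECR HRs eqxx.
    by rewrite EB D1_notin // notR.
  + move=> HB. case: (eqVneq B R) => [->|HBR]; first by rewrite ER eqxx.
    apply/orP; right. apply/in_rem1; split; first exact: P1.
    exists B => //. by rewrite D1_notin // notR.
-
  have Hex : exists x, x \in R `\ s by apply/fset0Pn.
  case: (ex_minnP Hex) => r Hr Hmin.
  move: (Hr); rewrite in_fsetD1 => /andP [Hrs rR].
  have Hsr : s < r by have := Rrange r rR; move: Hrs => /eqP; slia.
  have Hre : r < e by have := Rrange r rR; slia.
  have K : forall C x y, C \in P -> C != R -> x \in C -> y \in C -> x < r -> y < r.
    move=> C x y HC HCR xC yC Hxr. rewrite ltnNge leq_eqVlt. apply/negP => /orP [/eqP Ery|Hry].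
      subst y. by move: HCR; rewrite (P2 C R r) ?eqxx.
    have Hsx : s < x.
      have : s <= x < e by apply/P3; exists C.
      have : x != s by apply: contraNneq (notR C HC HCR) => <-.
      slia.
    by move: HCR; rewrite (P4 R C s r x y) ?eqxx.
  have HRP' : R `\ s \in rem1 s P by apply/in_rem1; split => //; exists R.
  have Hcond : forall C x y, C \in rem1 s P -> x \in C -> y \in C -> (x < r) = (y < r).
    move=> C x y /in_rem1 [_ [C0 HC0 ->]] xC yC.
    case: (eqVneq C0 R) => [E|HC0R].
      subst C0. have := Hmin x xC. have := Hmin y yC. slia.
    move: xC yC; rewrite !D1_notin ?notR // => xC yC.
    apply/idP/idP; [exact: K HC0 HC0R xC yC | exact: K HC0 HC0R yC xC].
  have [[Q1 Q2 Q3] Q4] := HP'.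
  have Prng : forall C x, C \in rem1 s P -> x \in C -> s.+1 <= x < e.
    move=> C x HC Hx. apply/Q3. by exists C.
  have HP1 := restrict s.+1 r HP' (leqnn _) (ltnW Hre)
    ltac:(move=> C x y HC xC yC; have := Prng C x HC xC; have := Prng C y HC yC;
          have := Hcond C x y HC xC yC; case: (x < r); case: (y < r); slia).
  have HP2 := restrict r e HP' Hsr (leqnn _)
    ltac:(move=> C x y HC xC yC; have := Prng C x HC xC; have := Prng C y HC yC;
          have := Hcond C x y HC xC yC; case: (leqP r x); case: (leqP r y); slia).
  have [c [nc wc Hac Hdc]] := HTP s (r - s) (filt s.+1 r (rem1 s P)) ltac:(slia) ltac:(slia)
     ltac:(by rewrite subnKC // ltnW).
  have [cs2 [Hne2 ncs2 wcs2 Hsar2 HL2]] := IH r e (filt r e (rem1 s P)) ltac:(slia) Hre HP2.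
  exists (c :: cs2); split => //=.
  + by rewrite nc ncs2.
  + by rewrite wc wcs2.
  + rewrite sar_cons Hac Hsar2. slia.
  have Hsa : s + arity c = r by rewrite Hac; slia.
  rewrite Lden_cons // Hsa Hdc.
  have ERB : blk (r :: rts cs2 r) = R `\ s.
    have Hin : blk (r :: rts cs2 r) \in rem1 s P.
      have : blk (r :: rts cs2 r) \in filt r e (rem1 s P).
        by rewrite -HL2 /Lden in_fsetU in_fset1 eqxx.
      by rewrite in_filt => /andP [].
    apply: (Q2 _ _ r Hin HRP'); first by rewrite in_blk mem_head.
    by rewrite in_fsetD1 rR andbT.
  rewrite ERB fsetD1K //.
  apply/fsetP => B. rewrite !in_fsetU in_fset1. apply/idP/idP.
  + move=> /orP [/eqP ->//|/orP [HB|HB]].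
    * move: HB; rewrite in_filt => /andP [/in_rem1 [Hne [C HC EB]] /allP Hal].
      case: (eqVneq C R) => [ECR|HCR].
        exfalso. have := Hal r. rewrite EB ECR in_fsetD1 rR andbT Hrs => /(_ isT). by rewrite ltnn andbF.
      by rewrite EB D1_notin // notR.
    * have [_ Hr2] := chs_range wcs2 HB.
      have : B \in filt r e (rem1 s P) by rewrite -HL2 /Lden in_fsetU HB orbT.
      rewrite in_filt => /andP [/in_rem1 [Hne [C HC EB]] _].
      case: (eqVneq C R) => [ECR|HCR].
        exfalso. have := Hr2 r. rewrite EB ECR in_fsetD1 rR andbT Hrs => /(_ isT). by rewrite ltnn.
      by rewrite EB D1_notin // notR.
  + move=> HB. case: (eqVneq B R) => [->|HBR]; first by [] .
    have sB := notR B HB HBR.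
    have HB' : B \in rem1 s P.
      apply/in_rem1; split; first exact: P1. exists B => //. by rewrite D1_notin.
    have /fset0Pn [x xB] := P1 B HB.
    apply/orP; right. case: (ltnP x r) => Hxr.
    * apply/orP; left. rewrite in_filt HB' /=. apply/allP => y yB.
      have := Prng B y HB' yB. have := K B x y HB HBR xB yB Hxr. slia.
    * apply/orP; right.
      have HB2 : B \in filt r e (rem1 s P).
        rewrite in_filt HB' /=. apply/allP => y yB.
        have Hyr : ~~ (y < r) by rewrite -(Hcond B x y HB' xB yB) -leqNgt.
        rewrite -leqNgt in Hyr. rewrite Hyr /=.
        by case/andP: (Prng B y HB' yB).
      move: HB2; rewrite -HL2 /Lden in_fsetU in_fset1 ERB => /orP [/eqP EB|//].
      exfalso. move: HBR; rewrite (P2 B R r HB HR) ?eqxx //.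
      by rewrite EB.
Qed.


Local Open Scope fset_scope.

Theorem mainTheorem1 :
  (forall t, wf t -> NCP (arity t) (eval t)) /\
  eval Leaf = fset0 /\
  (forall n, 2 <= n -> eval (corolla n) = pgen n) /\
  (forall t s j, wf t -> wf s -> j < arity t ->
     eval (graft t j s) = ncomp j.+1 (arity s) (eval t) (eval s)) /\
  (forall t t', wf t -> wf t' -> treq t t' -> eval t = eval t') /\
  (forall t t', wf t -> wf t' -> arity t = arity t' ->
     eval t = eval t' -> treq t t') /\
  (forall n P, NCP n P -> exists t, [/\ wf t, arity t = n & eval t = P]).
Proof.
split; [|split; [by []|split; [|split; [|split; [|split]]]]].
- move=> t wt.
  have [t' [n' w' H']] := nf_exists (tsz t) t (leqnn _) wt.
  rewrite (eval_treq t t' H' wt) eval_den // (proj1 (treq_inv H')).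
  apply: NCP_NCPR; first exact: wf_arity.
  exact: (den_NCPR t' 0 n' w').
- exact: eval_corolla.
- move=> t s j wt ws Hj. exact: eval_graft.
- move=> t t' wt _ H. exact: eval_treq.
- move=> t t' wt wt' Ha He.
  have [u [nu wu Hu]] := nf_exists (tsz t) t (leqnn _) wt.
  have [u' [nu' wu' Hu']] := nf_exists (tsz t') t' (leqnn _) wt'.
  have Eu : u = u'.
    apply: (nf_inj u u' 0) => //.
    + by rewrite -(proj1 (treq_inv Hu)) -(proj1 (treq_inv Hu')).
    + by rewrite -!eval_den // -(eval_treq t u Hu wt) -(eval_treq t' u' Hu' wt').
  subst u'. exact: (treq_trans Hu (treq_sym Hu')).
- move=> n P HP. have Hn : 0 < n by case: HP.
  have HP' := NCPR_NCP n P HP.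
  have [t [nt wt At Dt]] := TP (LP n) 0 n P Hn (leq_pred n) HP'.
  exists t; split => //. by rewrite eval_den.
Qed.
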